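(* There exists a connected highly arc transitive digraph $D$ with an epimorphism $\varphi:D\to Z$ onto the integer-line digraph such that all fibers $\varphi^{-1}(i)$, $i\in\mathbb{Z}$, are finite, and whose associated digraph $\Delta(D)$ is not complete bipartite.
   Context: The integer-line digraph is $Z=(\mathbb{Z},\{(i,i+1)\mid i\in\mathbb{Z}\})$; an epimorphism is a surjective digraph homomorphism. An $n$-arc is a sequence of directed edges $e_0,\dots,e_{n-1}$ with the terminal vertex of $e_i$ equal to the initial vertex of $e_{i+1}$; a digraph is highly arc transitive if for every $n\in\mathbb{N}$ its automorphism group acts transitively on its (nonempty set of) $n$-arcs. An alternating walk is a sequence of edges $e_0,\dots,e_{n-1}$ in which consecutive edges alternately share their initial vertex and their terminal vertex. Two edges are reachable from each other if some alternating walk contains both; this is an equivalence relation. For an edge $e$, $\Delta(e)$ is the subgraph spanned by the reachability class of $e$; in a highly arc transitive digraph all $\Delta(e)$ are isomorphic and their common isomorphism type is the associated digraph $\Delta(D)$. *)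

(* Defs.v *)
From Stdlib Require Import ZArith List Relations.
Import ListNotations.
Open Scope Z_scope.

Section Digraph.
Variable V : Type.
Variable E : V -> V -> Prop.

Definition is_edge (e : V * V) : Prop := E (fst e) (snd e).

Definition connected_digraph : Prop :=
  forall x y : V, clos_refl_sym_trans V E x y.

Definition is_automorphism (f : V -> V) : Prop :=
  (exists g : V -> V, (forall x, g (f x) = x) /\ (forall y, f (g y) = y)) /\
  (forall x y, E x y <-> E (f x) (f y)).

Fixpoint chained (l : list (V * V)) : Prop :=
  match l with
  | [] => True
  | e :: l' =>
      match l' with
      | [] => True
      | e' :: _ => snd e = fst e' /\ chained l'
      end
  end.

Definition is_arc (n : nat) (l : list (V * V)) : Prop :=
  length l = n /\ Forall is_edge l /\ chained l.

Definition map_edge (f : V -> V) (e : V * V) : V * V := (f (fst e), f (snd e)).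

Definition highly_arc_transitive : Prop :=
  forall n : nat,
    (exists a, is_arc n a) /\
    (forall a b, is_arc n a -> is_arc n b ->
       exists f, is_automorphism f /\ map (map_edge f) a = b).

(* Alternating sequences: consecutive edges alternately share their initial
   vertex and their terminal vertex; the flag says which comes next. *)
Fixpoint alt_from (share_init : bool) (l : list (V * V)) : Prop :=
  match l with
  | [] => True
  | e :: l' =>
      match l' with
      | [] => True
      | e' :: _ =>
          (if share_init then fst e = fst e' else snd e = snd e') /\
          alt_from (negb share_init) l'
      end
  end.

Definition alternating_walk (l : list (V * V)) : Prop :=
  l <> [] /\ Forall is_edge l /\ exists b, alt_from b l.

Definition reachable (e f : V * V) : Prop :=
  exists l, alternating_walk l /\ In e l /\ In f l.

(* Delta(e): the subgraph spanned by the reachability class of e. *)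
Definition Delta_edge (e f : V * V) : Prop := is_edge f /\ reachable e f.
Definition Delta_vertex (e : V * V) (v : V) : Prop :=
  exists f, Delta_edge e f /\ (v = fst f \/ v = snd f).

Definition Delta_complete_bipartite (e : V * V) : Prop :=
  exists A B : V -> Prop,
    (forall v, ~ (A v /\ B v)) /\
    (forall v, Delta_vertex e v <-> A v \/ B v) /\
    (forall x y, Delta_edge e (x, y) <-> A x /\ B y).

Definition is_hom_to_Zline (phi : V -> Z) : Prop :=
  forall x y, E x y -> phi y = phi x + 1.

Definition is_epi_to_Zline (phi : V -> Z) : Prop :=
  is_hom_to_Zline phi /\
  (forall i : Z, exists v, phi v = i) /\
  (forall i : Z, exists x y, E x y /\ phi x = i /\ phi y = i + 1).

Definition finite_fibers (phi : V -> Z) : Prop :=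
  forall i : Z, exists l : list V, forall v, phi v = i -> In v l.

End Digraph.

(* Main.v *)
Require Import Defs.
From Stdlib Require Import ZArith List.
From Stdlib Require Import Lia Relations.
Import ListNotations.
Open Scope Z_scope.

Inductive T3 := A3 | B3 | C3.
Definition T3_eq_dec : forall a b : T3, {a = b} + {a <> b}.
Proof. decide equality. Defined.

Definition other (u w : T3) : T3 :=
  match u, w with
  | A3, A3 => B3 | A3, B3 => C3 | A3, C3 => B3
  | B3, A3 => C3 | B3, B3 => A3 | B3, C3 => A3
  | C3, A3 => B3 | C3, B3 => A3 | C3, C3 => A3 end.
Lemma other_ne1 u w : u <> other u w. Proof. destruct u, w; discriminate. Qed.
Lemma other_ne2 u w : w <> other u w. Proof. destruct u, w; discriminate. Qed.

Definition Vt := (Z * (T3 * T3))%type.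
Definition Ed (v w : Vt) : Prop := fst w = fst v + 1 /\ snd (snd v) <> fst (snd w).

Definition tr (u w t : T3) : T3 :=
  if T3_eq_dec t u then w else if T3_eq_dec t w then u else t.
Lemma tr_inv u w t : tr u w (tr u w t) = t.
Proof. unfold tr; repeat (destruct T3_eq_dec; subst; try congruence). Qed.
Lemma tr_u u w : tr u w u = w.
Proof. unfold tr; destruct T3_eq_dec; congruence. Qed.
Lemma tr_fix u w z : z <> u -> z <> w -> tr u w z = z.
Proof. intros; unfold tr; repeat destruct T3_eq_dec; congruence. Qed.

Definition F (s : Z) (pi : Z -> T3 -> T3) (v : Vt) : Vt :=
  (fst v + s, (pi (fst v) (fst (snd v)), pi (fst v + 1) (snd (snd v)))).

Lemma F_auto s pi (Hinv : forall p t, pi p (pi p t) = t) :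
  is_automorphism Vt Ed (F s pi).
Proof.
  split.
  - exists (fun v => (fst v - s, (pi (fst v - s) (fst (snd v)),
                                   pi (fst v - s + 1) (snd (snd v))))).
    split.
    + intros [i [x y]]; unfold F; simpl.
      replace (i + s - s) with i by lia. rewrite !Hinv. reflexivity.
    + intros [i [x y]]; unfold F; simpl.
      replace (i - s + s) with i by lia. rewrite !Hinv. reflexivity.
  - intros [i [x y]] [j [x' y']]; unfold Ed, F; simpl. split.
    + intros [H1 H2]; split; [lia|]. subst j. intro Hc.
      apply H2. apply (f_equal (pi (i+1))) in Hc. rewrite !Hinv in Hc. exact Hc.
    + intros [H1 H2]. assert (j = i + 1) by lia. subst j. split; [reflexivity|].
      intro Hc; apply H2; congruence.
Qed.

Lemma auto_comp (V : Type) (E : V -> V -> Prop) f g :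
  is_automorphism V E f -> is_automorphism V E g ->
  is_automorphism V E (fun x => g (f x)).
Proof.
  intros [[f' [Hf1 Hf2]] Hf] [[g' [Hg1 Hg2]] Hg]. split.
  - exists (fun y => f' (g' y)). split; intros; congruence.
  - intros x y. rewrite Hf, Hg. tauto.
Qed.

Lemma auto_id (V : Type) (E : V -> V -> Prop) : is_automorphism V E (fun x => x).
Proof. split. exists (fun x => x); split; auto. tauto. Qed.

Lemma vertex_trans (v w : Vt) : exists f, is_automorphism Vt Ed f /\ f v = w.
Proof.
  destruct v as [i [x y]], w as [j [x' y']].
  set (pi := fun p => if Z.eq_dec p i then tr x x'
                      else if Z.eq_dec p (i+1) then tr y y' else (fun t => t)).
  exists (F (j - i) pi). split.
  - apply F_auto. intros p t; unfold pi.
    repeat destruct Z.eq_dec; try apply tr_inv; reflexivity.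
  - unfold F, pi; simpl. destruct (Z.eq_dec i i); [|congruence].
    destruct (Z.eq_dec (i+1) i); [lia|]. destruct (Z.eq_dec (i+1) (i+1)); [|congruence].
    rewrite !tr_u. f_equal. lia.
Qed.

Lemma chain_levels : forall l (w : Vt), Forall (is_edge Vt Ed) l -> chained Vt l ->
  (match l with [] => True | e :: _ => fst e = w end) ->
  forall e, In e l -> (fst (fst e) >= fst w /\ (fst (fst e) = fst w -> fst e = w))
                      /\ fst (snd e) > fst w.
Proof.
  induction l as [|e0 l0 IH]; intros w Hf Hc Hh e Hin; [destruct Hin|].
  inversion Hf as [|? ? He0 Hf0]; subst.
  destruct Hin as [<-|Hin].
  - unfold is_edge, Ed in He0. split; [split; [lia|auto]|lia].
  - assert (Hc0 : chained Vt l0 /\ (match l0 with [] => True | e1 :: _ => fst e1 = snd e0 end)).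
    { destruct l0; simpl in *; [tauto|]. destruct Hc; split; auto. }
    destruct Hc0 as [Hc0 Hh0].
    destruct (IH (snd e0) Hf0 Hc0 Hh0 e Hin) as [[H1 H2] H3].
    unfold is_edge, Ed in He0. try subst w. try rewrite <- Hh. split; [split; [lia|intro; lia]|lia].
Qed.

Lemma is_arc_tail n e l : is_arc Vt Ed (S n) (e :: l) ->
  is_arc Vt Ed n l /\ is_edge Vt Ed e /\
  (match l with [] => True | e1 :: _ => fst e1 = snd e end).
Proof.
  intros [Hl [Hf Hc]]. inversion Hf; subst. simpl in Hl.
  destruct l; simpl in *.
  - injection Hl as Hl. split; [split; [auto|split; auto]|split; auto].
  - injection Hl as Hl. destruct Hc. split; [split; [auto|split; auto]|split; auto].
Qed.

Lemma adjust (f : Vt -> Vt) u v u' v' l' :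
  is_automorphism Vt Ed f -> f v = v' -> Ed u v -> Ed u' v' ->
  Forall (is_edge Vt Ed) l' -> chained Vt l' ->
  (match l' with [] => True | e :: _ => fst e = v' end) ->
  exists h, is_automorphism Vt Ed h /\ h (f u) = u' /\ h v' = v' /\
            map (map_edge Vt h) l' = l'.
Proof.
  intros Hf Hv Huv Hu'v' Hl1 Hl2 Hl3.
  assert (Hfe : Ed (f u) v') by (rewrite <- Hv; exact (proj1 (proj2 Hf u v) Huv)).
  destruct u' as [k [x0 y0]], v' as [kv [x y]].
  destruct (f u) as [k1 [x1 y1]] eqn:Hfu.
  unfold Ed in *; simpl in *. destruct Hfe as [Hk1 Hn1]. destruct Hu'v' as [Hk0 Hn0].
  assert (k1 = k) by lia. subst k1. subst kv.
  set (pi := fun p => if Z.eq_dec p k then tr x1 x0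
                      else if Z.eq_dec p (k+1) then tr y1 y0 else (fun t => t)).
  assert (Hfar : forall z : Vt, fst z >= k + 2 -> F 0 pi z = z).
  { intros [j [a b]] Hj; unfold F, pi; simpl in *.
    repeat destruct Z.eq_dec; try lia. f_equal. lia. }
  assert (Hv' : F 0 pi (k+1, (x, y)) = (k+1, (x, y))).
  { unfold F, pi; simpl. repeat destruct Z.eq_dec; try lia.
    rewrite tr_fix by congruence. f_equal. lia. }
  exists (F 0 pi). split; [|split; [|split]].
  - apply F_auto. intros p t; unfold pi.
    repeat destruct Z.eq_dec; try apply tr_inv; reflexivity.
  - unfold F, pi; simpl. repeat destruct Z.eq_dec; try lia.
    rewrite !tr_u. f_equal. lia.
  - exact Hv'.
  - rewrite <- (map_id l') at 2. apply map_ext_in. intros [a b] Hin.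
    destruct (chain_levels l' (k+1, (x,y)) Hl1 Hl2 Hl3 (a,b) Hin) as [[H1 H2] H3].
    simpl in *. unfold map_edge; simpl.
    rewrite (Hfar b) by lia.
    destruct (Z.eq_dec (fst a) (k+1)) as [Ha|Ha].
    + rewrite (H2 Ha), Hv'. reflexivity.
    + rewrite (Hfar a) by lia. reflexivity.
Qed.

Lemma trans_main : forall a n b, is_arc Vt Ed n a -> is_arc Vt Ed n b ->
  exists f, is_automorphism Vt Ed f /\ map (map_edge Vt f) a = b.
Proof.
  induction a as [|e l IH]; intros n b Ha Hb.
  - destruct Ha as [Hl _]; destruct Hb as [Hl' _]. simpl in Hl. subst n.
    destruct b; [|discriminate]. exists (fun x => x). split; [apply auto_id|reflexivity].
  - destruct Ha as [Hl Hr]. simpl in Hl. subst n.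
    destruct b as [|e' l']; [destruct Hb as [Hb _]; discriminate|].
    destruct (is_arc_tail _ _ _ (conj eq_refl Hr)) as [Hal [He Hhl]].
    destruct (is_arc_tail _ _ _ Hb) as [Hbl [He' Hhl']].
    assert (Hf : exists f, is_automorphism Vt Ed f /\ map (map_edge Vt f) l = l' /\
                           f (snd e) = snd e').
    { destruct l as [|e1 l1].
      - destruct Hbl as [Hbl _]. destruct l'; [|discriminate].
        destruct (vertex_trans (snd e) (snd e')) as [f [Hf1 Hf2]].
        exists f; auto.
      - destruct (IH _ _ Hal Hbl) as [f [Hf1 Hf2]].
        exists f; split; [auto|split; [auto|]].
        destruct l' as [|e1' l1']; [discriminate|].
        simpl in Hf2. injection Hf2 as Hf3 _.
        rewrite <- Hhl, <- Hhl'. rewrite <- Hf3. reflexivity. }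
    destruct Hf as [f [Hf1 [Hf2 Hf3]]].
    destruct Hbl as [_ [Hbl1 Hbl2]].
    destruct e as [u v], e' as [u' v']. simpl in *.
    destruct (adjust f u v u' v' l' Hf1 Hf3 He He' Hbl1 Hbl2 Hhl')
      as [h [Hh1 [Hh2 [Hh3 Hh4]]]].
    exists (fun z => h (f z)). split; [apply auto_comp; auto|].
    simpl. unfold map_edge at 1; simpl. rewrite Hh2, Hf3, Hh3.
    f_equal. assert (Hm : map (map_edge Vt h) (map (map_edge Vt f) l) = l')
      by (rewrite Hf2; exact Hh4). rewrite map_map in Hm. rewrite <- Hm.
    apply map_ext. intros [a b]; reflexivity.
Qed.

Fixpoint arcfrom (k : Z) (n : nat) : list (Vt * Vt) :=
  match n with
  | O => []
  | S m => ((k, (A3, B3)), (k + 1, (A3, B3))) :: arcfrom (k + 1) m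
  end.

Lemma arcfrom_arc : forall n k, is_arc Vt Ed n (arcfrom k n).
Proof.
  induction n as [|n IH]; intros k.
  - repeat split; simpl; auto.
  - destruct (IH (k+1)) as [H1 [H2 H3]]. split; [simpl; auto|split].
    + constructor; auto. unfold is_edge, Ed; simpl; split; [reflexivity|discriminate].
    + simpl. destruct n; simpl; auto.
Qed.

Lemma same_level i x y x2 y2 :
  clos_refl_sym_trans Vt Ed (i, (x, y)) (i, (x2, y2)).
Proof.
  apply rst_trans with (i + 1, (other y y2, A3)).
  - apply rst_step. split; [reflexivity|apply other_ne1].
  - apply rst_sym, rst_step. split; [reflexivity|apply other_ne2].
Qed.

Lemma next_level i : clos_refl_sym_trans Vt Ed (i, (A3, A3)) (i + 1, (A3, A3)).
Proof.
  apply rst_trans with (i + 1, (B3, A3)).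
  - apply rst_step. split; [reflexivity|discriminate].
  - apply same_level.
Qed.

Lemma base_conn : forall n, clos_refl_sym_trans Vt Ed (0, (A3, A3)) (n, (A3, A3)).
Proof.
  apply Z.peano_ind.
  - apply rst_refl.
  - intros n H. eapply rst_trans; [exact H|]. rewrite <- Z.add_1_r. apply next_level.
  - intros n H. eapply rst_trans; [exact H|]. apply rst_sym.
    pose proof (next_level (Z.pred n)) as Hn. rewrite Z.add_1_r, Z.succ_pred in Hn. exact Hn.
Qed.

Theorem mainTheorem3 :
  exists (V : Type) (E : V -> V -> Prop) (phi : V -> Z),
    connected_digraph V E /\
    highly_arc_transitive V E /\
    is_epi_to_Zline V E phi /\
    finite_fibers V phi /\
    (forall e : V * V, is_edge V E e -> ~ Delta_complete_bipartite V E e).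
Proof.
  exists Vt, Ed, (fun v => fst v). split; [|split; [|split; [|split]]].
  - intros [i [x y]] [j [x' y']].
    apply rst_trans with (i, (A3, A3)); [apply same_level|].
    apply rst_trans with (0, (A3, A3)); [apply rst_sym, base_conn|].
    apply rst_trans with (j, (A3, A3)); [apply base_conn|apply same_level].
  - intros n. split.
    + exists (arcfrom 0 n). apply arcfrom_arc.
    + intros a b Ha Hb. exact (trans_main a n b Ha Hb).
  - split; [|split].
    + intros x y [H _]. exact H.
    + intros i. exists (i, (A3, A3)). reflexivity.
    + intros i. exists (i, (A3, A3)), (i + 1, (B3, A3)).
      split; [split; [reflexivity|discriminate]|split; reflexivity].
  - intros i. exists (map (fun p => (i, p)) (list_prod [A3; B3; C3] [A3; B3; C3])).
    intros [j [a b]] H. simpl in H. subst j. destruct a, b; cbn; tauto.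
  - intros [[i [x y]] [j [x' y']]] He [Aset [Bset [_ [_ Hedge]]]].
    destruct He as [Hj Hn]. simpl in Hj, Hn.
    set (z := other y x').
    assert (E1 : Delta_edge Vt Ed ((i,(x,y)),(j,(x',y'))) ((i,(x,y)),(j,(x',y')))).
    { split; [split; auto|]. exists [((i,(x,y)),(j,(x',y')))].
      split; [split; [discriminate|split; [constructor; [split; auto|constructor]|exists true; simpl; auto]]|].
      simpl; auto. }
    assert (E2 : Delta_edge Vt Ed ((i,(x,y)),(j,(x',y'))) ((i,(x,z)),(j,(y,y')))).
    { split.
      - split; simpl; [exact Hj|]. unfold z; intro Hc; apply (other_ne1 y x'); congruence.
      - exists [((i,(x,y)),(j,(x',y'))); ((i,(x,z)),(j,(x',y'))); ((i,(x,z)),(j,(y,y')))].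
        split; [split; [discriminate|split]|simpl; auto 10].
        + repeat constructor; unfold is_edge, Ed; simpl; auto.
          all: unfold z; intro Hc; first [apply (other_ne1 y x'); congruence | apply (other_ne2 y x'); congruence].
        + exists false. simpl. auto. }
    apply Hedge in E1. apply Hedge in E2.
    assert (E3 : Delta_edge Vt Ed ((i,(x,y)),(j,(x',y'))) ((i,(x,y)),(j,(y,y')))).
    { apply Hedge. tauto. }
    destruct E3 as [[_ Hc] _]. simpl in Hc. apply Hc; reflexivity.
Qed.
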